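(* Let $q$ be a prime power and $n$ a positive integer. Every sesquilinear form of $\mathbb F_{q^{2n}}/\mathbb F_{q^2}$ can be written as $\sigma_L$ for some $q^2$-linear polynomial $L$ over $\mathbb F_{q^{2n}}$. Moreover, for a $q^2$-linear polynomial $L$ over $\mathbb F_{q^{2n}}$, the following conditions are equivalent: (1) $\sigma_L$ is alternating; (2) $\sigma_L$ is the zero form; (3) $L(x)\equiv 0 \pmod{x^{q^{2n}}-x}$.
   Context: $\mathbb F_{q^{2n}}$ is regarded as an $n$-dimensional vector space over $\mathbb F_{q^2}$, and $\pi$ denotes the automorphism $x\mapsto x^q$ of $\mathbb F_{q^2}$. A sesquilinear form of $\mathbb F_{q^{2n}}/\mathbb F_{q^2}$ is a map $\sigma:\mathbb F_{q^{2n}}\times\mathbb F_{q^{2n}}\to\mathbb F_{q^2}$ such that for each fixed $v$, $\sigma(\cdot,v)$ is $\mathbb F_{q^2}$-linear and $\sigma(v,\cdot)$ is additive with $\sigma(v,cw)=c^q\sigma(v,w)$ for $c\in\mathbb F_{q^2}$. It is alternating if $\sigma(v,v)=0$ for all $v$. A $q^2$-linear polynomial over $\mathbb F_{q^{2n}}$ is a polynomial $\sum_i a_ix^{q^{2i}}$ with $a_i\in\mathbb F_{q^{2n}}$. $\mathrm{Tr}$ denotes the trace map $\mathbb F_{q^{2n}}\to\mathbb F_{q^2}$, and $\sigma_L(u,v)=\mathrm{Tr}(uL(v^q))$ for $u,v\in\mathbb F_{q^{2n}}$. *)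

(* Defs.v *)
From HB Require Import structures.
From mathcomp Require Import all_boot all_order all_algebra all_field.
Set Implicit Arguments. Unset Strict Implicit. Unset Printing Implicit Defensive.
Import GRing.Theory.
Local Open Scope ring_scope.

Definition prime_power (q : nat) : Prop :=
  exists p k : nat, [/\ prime p, (0 < k)%N & q = (p ^ k)%N].

Definition Fq2 (F : finFieldType) (q : nat) : pred F :=
  [pred x : F | x ^+ (q ^ 2) == x].

Definition Tr (F : finFieldType) (q n : nat) (x : F) : F :=
  \sum_(i < n) x ^+ (q ^ (2 * i)).

Definition sesquilinear (F : finFieldType) (q : nat) (s : F -> F -> F) : Prop :=
  [/\ (forall u v, s u v \in Fq2 q),
      (forall c u u' v, c \in Fq2 q -> s (c * u + u') v = c * s u v + s u' v),
      (forall v w w', s v (w + w') = s v w + s v w')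
    & (forall c v w, c \in Fq2 q -> s v (c * w) = c ^+ q * s v w)].

Definition alternating (F : finFieldType) (s : F -> F -> F) : Prop :=
  forall v, s v v = 0.

Definition qlin_poly (F : finFieldType) (q : nat) (a : seq F) : {poly F} :=
  \sum_(i < size a) a`_i *: 'X^(q ^ (2 * i)).

Definition sigmaL (F : finFieldType) (q n : nat) (a : seq F) (u v : F) : F :=
  Tr q n (u * (qlin_poly q a).[v ^+ q]).

(* Main.v *)
Require Import Defs.
From HB Require Import structures.
From mathcomp Require Import all_boot all_order all_algebra all_field.
From mathcomp Require Import zify ring.
Set Implicit Arguments. Unset Strict Implicit. Unset Printing Implicit Defensive.
Import GRing.Theory.
Local Open Scope ring_scope.

Section Main.
Variables (F : finFieldType) (p k n q : nat).
Hypotheses (pp : prime p) (k0 : (0 < k)%N) (n0 : (0 < n)%N)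
  (hq : q = (p ^ k)%N) (cardF : #|F| = (q ^ (2 * n))%N).

Lemma q_gt1 : (1 < q)%N.
Proof. rewrite hq -(expn0 p) ltn_exp2l //; exact: prime_gt1. Qed.

Lemma charF : p \in [pchar F].
Proof.
have H : #|F| = (p ^ (k * (2 * n)))%N by rewrite cardF hq -expnM.
exact: (card_finPcharP H pp).
Qed.

Lemma frobD e (x y : F) : (x + y) ^+ (q ^ e) = x ^+ (q ^ e) + y ^+ (q ^ e).
Proof.
apply: exprDn_pchar. rewrite (eq_pnat _ (pcharf_eq charF)) hq -expnM pnatX.
by rewrite pnat_id.
Qed.

Lemma frob0 e : (0 : F) ^+ (q ^ e) = 0.
Proof. by rewrite expr0n expn_eq0 (negbTE (lt0n_neq0 (ltnW q_gt1))). Qed.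

Lemma frobN e (x : F) : (- x) ^+ (q ^ e) = - x ^+ (q ^ e).
Proof. by apply/eqP; rewrite -subr_eq0 opprK -frobD addNr frob0. Qed.

Lemma frobB e (x y : F) : (x - y) ^+ (q ^ e) = x ^+ (q ^ e) - y ^+ (q ^ e).
Proof. by rewrite frobD frobN. Qed.

Lemma frob_sum e m (f : 'I_m -> F) :
  (\sum_(i < m) f i) ^+ (q ^ e) = \sum_(i < m) (f i) ^+ (q ^ e).
Proof. exact: (big_morph (fun x => x ^+ (q ^ e)) (@frobD e) (frob0 e)). Qed.

Lemma frobN_all (x : F) : x ^+ (q ^ (2 * n)) = x.
Proof. by rewrite -cardF expf_card. Qed.

Lemma Fq2E (c : F) : (c \in Fq2 q) = (c ^+ (q ^ 2) == c).
Proof. by []. Qed.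

Lemma Fq2_pow (c : F) i : c \in Fq2 q -> c ^+ (q ^ (2 * i)) = c.
Proof.
move/eqP=> H; elim: i => [|i IH]; first by rewrite muln0 expn0 expr1.
by rewrite mulnS expnD exprM H IH.
Qed.

Lemma Fq2_frob (c : F) : c \in Fq2 q -> c ^+ q \in Fq2 q.
Proof. by move/eqP=> H; rewrite Fq2E exprAC H. Qed.

Lemma Fq2_0 : (0 : F) \in Fq2 q. Proof. by rewrite Fq2E frob0. Qed.
Lemma Fq2_1 : (1 : F) \in Fq2 q. Proof. by rewrite Fq2E expr1n. Qed.
Lemma Fq2_D (a b : F) : a \in Fq2 q -> b \in Fq2 q -> a + b \in Fq2 q.
Proof. by rewrite !Fq2E frobD => /eqP -> /eqP ->. Qed.
Lemma Fq2_N (a : F) : a \in Fq2 q -> - a \in Fq2 q.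
Proof. by rewrite !Fq2E frobN => /eqP ->. Qed.
Lemma Fq2_M (a b : F) : a \in Fq2 q -> b \in Fq2 q -> a * b \in Fq2 q.
Proof. by rewrite !Fq2E exprMn => /eqP -> /eqP ->. Qed.

Lemma big_shift (R : Type) (idx : R) (op : Monoid.com_law idx) m (f : nat -> R) :
  f m = f 0%N -> \big[op/idx]_(i < m) f i.+1 = \big[op/idx]_(i < m) f i.
Proof.
case: m => [|m] H; first by rewrite !big_ord0.
by rewrite big_ord_recr big_ord_recl /= H Monoid.mulmC.
Qed.

Lemma TrD (x y : F) : Tr q n (x + y) = Tr q n x + Tr q n y.
Proof. by rewrite /Tr -big_split /=; apply: eq_bigr => i _; rewrite frobD. Qed.

Lemma Tr0 : Tr q n (0 : F) = 0.
Proof. by rewrite /Tr big1 // => i _; rewrite frob0. Qed.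

Lemma TrN (x : F) : Tr q n (- x) = - Tr q n x.
Proof. by apply/eqP; rewrite -subr_eq0 opprK -TrD addNr Tr0. Qed.

Lemma TrZ (c x : F) : c \in Fq2 q -> Tr q n (c * x) = c * Tr q n x.
Proof.
move=> Hc; rewrite /Tr mulr_sumr; apply: eq_bigr => i _.
by rewrite exprMn (Fq2_pow _ Hc).
Qed.

Lemma Tr_in (x : F) : Tr q n x \in Fq2 q.
Proof.
rewrite Fq2E /Tr frob_sum.
rewrite -(@big_shift _ _ +%R _ (fun i => x ^+ (q ^ (2 * i)))).
  by apply/eqP/eq_bigr => i _; rewrite -exprM -expnD mulnS addnC.
by rewrite frobN_all muln0 expn0 expr1.
Qed.


Lemma frobq (x y : F) : (x + y) ^+ q = x ^+ q + y ^+ q.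
Proof. by have := frobD 1 x y; rewrite expn1. Qed.

Lemma Lval (a : seq F) x :
  (qlin_poly q a).[x] = \sum_(i < size a) a`_i * x ^+ (q ^ (2 * i)).
Proof.
rewrite /qlin_poly horner_sum; apply: eq_bigr => i _.
by rewrite hornerZ hornerXn.
Qed.

Lemma LD (a : seq F) x y :
  (qlin_poly q a).[x + y] = (qlin_poly q a).[x] + (qlin_poly q a).[y].
Proof.
rewrite !Lval -big_split /=; apply: eq_bigr => i _.
by rewrite frobD mulrDr.
Qed.

Lemma LZ (a : seq F) c x : c \in Fq2 q ->
  (qlin_poly q a).[c * x] = c * (qlin_poly q a).[x].
Proof.
move=> Hc; rewrite !Lval mulr_sumr; apply: eq_bigr => i _.
by rewrite exprMn (Fq2_pow _ Hc) mulrCA.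
Qed.

Lemma sigma_sesqui (a : seq F) : sesquilinear q (sigmaL q n a).
Proof.
rewrite /sigmaL; split.
- by move=> u v; apply: Tr_in.
- by move=> c u u' v Hc; rewrite mulrDl TrD -mulrA TrZ.
- by move=> v w w'; rewrite frobq LD mulrDr TrD.
- move=> c v w Hc; rewrite exprMn LZ; last first. apply: (Fq2_frob Hc).
  by rewrite mulrCA (TrZ _ (Fq2_frob Hc)).
Qed.

Lemma size_qlin (a : seq F) :
  (size (qlin_poly q a) <= (q ^ (2 * (size a).-1)).+1)%N.
Proof.
rewrite /qlin_poly; apply: leq_trans (size_sum _ _ _) _.
apply/bigmax_leqP => i _.
apply: leq_trans (size_scale_leq _ _) _.
rewrite size_polyXn ltnS leq_exp2l ?q_gt1 // leq_mul2l /=.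
case: i => i /= Hi; lia.
Qed.

Lemma coef_qlin (a : seq F) j : (qlin_poly q a)`_(q ^ (2 * j)) = a`_j.
Proof.
rewrite /qlin_poly coef_sum.
have -> : \sum_(i < size a) (a`_i *: 'X^(q ^ (2 * i)))`_(q ^ (2 * j)) =
          \sum_(i < size a | i == j :> nat) a`_i.
  rewrite [RHS]big_mkcond /=; apply: eq_bigr => i _.
  rewrite coefZ coefXn eqn_exp2l ?q_gt1 // eqn_pmul2l // eq_sym.
  by case: (i == j :> nat); rewrite ?mulr1 ?mulr0.
rewrite (big_ord1_eq _ (fun i => a`_i)).
by case: ifP => // /negbT; rewrite -leqNgt => H; rewrite nth_default.
Qed.

Lemma poly_zero (P : {poly F}) :
  (size P <= #|F|)%N -> (forall x, P.[x] = 0) -> P = 0.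
Proof.
move=> Hs Hr; apply/eqP; apply/negPn/negP => HP.
have H1 : all (root P) (enum F) by apply/allP => x _; apply/rootP.
have := max_poly_roots HP H1 (enum_uniq F).
by rewrite -cardE ltnNge Hs.
Qed.

Lemma qlin_inj (a b : seq F) : (size a <= n)%N -> (size b <= n)%N ->
  (forall x, (qlin_poly q a).[x] = (qlin_poly q b).[x]) -> forall j, a`_j = b`_j.
Proof.
move=> Ha Hb H j.
have Hs : forall c : seq F, (size c <= n)%N -> (size (qlin_poly q c) <= #|F|)%N.
  move=> c Hc; apply: leq_trans (size_qlin c) _.
  rewrite cardF; apply: (@leq_trans (q ^ (2 * n.-1)).+1); last first.
    rewrite ltn_exp2l ?q_gt1 // ltn_mul2l /=; by case: n n0.
  by rewrite ltnS leq_exp2l ?q_gt1 // leq_mul2l /= -!subn1 leq_sub2r.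
have : qlin_poly q a - qlin_poly q b = 0.
  apply: poly_zero; last by move=> x; rewrite hornerD hornerN H subrr.
  by apply: leq_trans (size_polyD _ _) _; rewrite size_polyN geq_max !Hs.
move/eqP; rewrite subr_eq0 => /eqP E.
by rewrite -coef_qlin E coef_qlin.
Qed.

Lemma Tr_qlin (x : F) : Tr q n x = (qlin_poly q (nseq n 1)).[x].
Proof.
rewrite Lval /Tr.
rewrite -(big_mkord xpredT (fun i => (nseq n 1)`_i * x ^+ (q ^ (2 * i)))).
rewrite size_nseq big_mkord; apply: eq_bigr => i _.
by rewrite nth_nseq ltn_ord mul1r.
Qed.

Lemma nondeg : exists t : F, Tr q n t != 0.
Proof.
case: (boolP [exists t : F, Tr q n t != 0]) => [/existsP [t Ht]|]; first by exists t.
rewrite negb_exists => /forallP H; exfalso.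
have := @qlin_inj (nseq n 1) [::]; rewrite size_nseq leqnn => /(_ isT isT).
move=> /(_ _ 0%N) ; rewrite nth_nseq n0 /= => E.
have /eqP := oner_neq0 F; apply; apply: E => x.
rewrite -Tr_qlin; move: (H x); rewrite negbK => /eqP ->.
by rewrite /qlin_poly big_ord0 horner0.
Qed.

Lemma Tr_inj (y1 y2 : F) :
  (forall u, Tr q n (u * y1) = Tr q n (u * y2)) -> y1 = y2.
Proof.
move=> H; apply/eqP; rewrite -subr_eq0; apply/negPn/negP => Hy.
have [t Ht] := nondeg.
have := H (t / (y1 - y2)).
move/eqP; rewrite -subr_eq0 -TrN -TrD -mulrN -mulrDr -mulrA mulVf // mulr1.
by rewrite (negbTE Ht).
Qed.

Lemma frob_surj (v : F) : v = (v ^+ (q ^ (2 * n).-1)) ^+ q.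
Proof.
by rewrite -exprM -expnSr prednK ?muln_gt0 // frobN_all.
Qed.


Lemma zero_iff (a : seq F) :
  (forall u v, sigmaL q n a u v = 0) <->
  ('X^(q ^ (2 * n)) - 'X) %| qlin_poly q a.
Proof.
split.
- move=> H.
  have HL : forall w, (qlin_poly q a).[w] = 0.
    move=> w; rewrite (frob_surj w); apply: Tr_inj => u.
    by rewrite mulr0 Tr0; apply: H.
  rewrite -cardF finField_genPoly.
  have Hr : all (root (qlin_poly q a)) (index_enum F).
    by apply/allP => x _; apply/rootP.
  have Hu : uniq_roots (index_enum F) by rewrite uniq_rootsE index_enum_uniq.
  have [r Er] := uniq_roots_prod_XsubC Hr Hu.
  by apply/dvdpP; exists r.
- move=> /dvdpP [r Er] u v.
  rewrite /sigmaL Er hornerM hornerD hornerN hornerXn hornerX -cardF expf_card subrr !mulr0.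
  exact: Tr0.
Qed.


Lemma cardF_gt1 : (1 < #|F|)%N.
Proof.
rewrite cardF; have := q_gt1 => H.
by rewrite (@leq_trans q) // -{1}(expn1 q) leq_exp2l // muln_gt0.
Qed.

Lemma prim_exists : exists z : F, (#|F|.-1).-primitive_root z.
Proof.
have Hpos : (0 < #|F|.-1)%N by rewrite -subn1 subn_gt0 cardF_gt1.
have H1 : all (#|F|.-1).-unity_root (enum (predC1 (0 : F))).
  apply/allP => x; rewrite mem_enum /= => Hx.
  rewrite unity_rootE; apply/eqP.
  have F0 : (0 < #|F|)%N by apply: ltnW; apply: cardF_gt1.
  by apply: (mulfI Hx); rewrite mulr1 -exprS prednK // expf_card.
have := cyclic.has_prim_root Hpos H1 (enum_uniq _).
rewrite -cardE cardC1 leqnn => /(_ isT) /hasP [z _ Hz].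
by exists z.
Qed.

Lemma prim_nz (z : F) : (#|F|.-1).-primitive_root z -> z != 0.
Proof.
move=> Hz; apply/eqP => E.
have Hpos : (0 < #|F|.-1)%N by rewrite -subn1 subn_gt0 cardF_gt1.
have := prim_expr_order Hz; rewrite E expr0n (negbTE (lt0n_neq0 Hpos)).
by move/eqP; rewrite eq_sym oner_eq0.
Qed.

Lemma c_exists : exists c : F, c \in Fq2 q /\ c ^+ q != c.
Proof.
have [z Hz] := prim_exists.
have Hz0 := prim_nz Hz.
set m := (\sum_(i < n) (q ^ 2) ^ (n.-1 - i) * 1 ^ i)%N.
have Hm : (#|F|.-1 = (q ^ 2 - 1) * m)%N.
  by rewrite -subn_exp exp1n -expnM cardF subn1.
have q1 := q_gt1.
have Hpos : (0 < #|F|.-1)%N by rewrite -subn1 subn_gt0 cardF_gt1.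
have m0 : (0 < m)%N by move: Hpos; rewrite Hm muln_gt0 => /andP [].
exists (z ^+ m); split.
- rewrite Fq2E -exprM.
  have -> : (m * q ^ 2 = m * (q ^ 2 - 1) + m)%N.
    rewrite -{3}(muln1 m) -mulnDr subnK //.
    by rewrite expn_gt0 (ltnW q1).
  rewrite exprD mulnC -Hm prim_expr_order // mul1r //.
- apply/negP => /eqP E.
  have E1 : (z ^+ m) ^+ (q - 1) = 1.
    have Hq : q = (q - 1).+1 by rewrite subn1 prednK // ltnW.
    apply: (mulfI (expf_neq0 m Hz0)); rewrite mulr1 -exprS -Hq.
    exact: E.
  move/eqP: E1; rewrite -exprM -(prim_order_dvd Hz) Hm => /dvdn_leq.
  rewrite muln_gt0 m0 subn_gt0 q1 => /(_ isT).
  rewrite mulnC leq_mul2l (negbTE (lt0n_neq0 m0)) /=.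
  have qq : (q < q ^ 2)%N by rewrite -{1}(expn1 q) ltn_exp2l.
  by apply/negP; rewrite -ltnNge ltn_sub2r // (ltn_trans q1).
Qed.

Section Sesq.
Variable s : F -> F -> F.
Hypothesis hs : sesquilinear q s.

Lemma s0l v : s 0 v = 0.
Proof.
case: hs => _ H _ _; have E := H 1 0 0 v Fq2_1.
rewrite !mul1r addr0 in E.
by apply: (addrI (s 0 v)); rewrite addr0 -E.
Qed.

Lemma sDl x y v : s (x + y) v = s x v + s y v.
Proof. by case: hs => _ H _ _; rewrite -{1}(mul1r x) H ?mul1r // Fq2_1. Qed.

Lemma sZl c x v : c \in Fq2 q -> s (c * x) v = c * s x v.
Proof. by case: hs => _ H _ _ Hc; rewrite -(addr0 (c * x)) H // s0l addr0. Qed.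

Lemma s0r v : s v 0 = 0.
Proof.
case: hs => _ _ H _; have E := H v 0 0.
rewrite addr0 in E.
by apply: (addrI (s v 0)); rewrite addr0 -E.
Qed.

Lemma sDr v x y : s v (x + y) = s v x + s v y.
Proof. by case: hs => _ _ H _. Qed.

Lemma sZr c v x : c \in Fq2 q -> s v (c * x) = c ^+ q * s v x.
Proof. by case: hs => _ _ _ H; apply: H. Qed.

Lemma alt_zero : (forall v, s v v = 0) -> forall u v, s u v = 0.
Proof.
move=> Ha u v.
have Hsym : forall x y, s x y = - s y x.
  move=> x y; apply/eqP; rewrite -subr_eq0 opprK.
  have := Ha (x + y); rewrite !sDl !sDr !Ha add0r addr0 => ->.
  by [].
have [c [Hc Hcq]] := c_exists.
have := Ha (u + c * v).
rewrite !sDl !sDr !Ha sZr // sZl // add0r addr0 (Hsym v u) mulrN -mulrBl.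
by move/eqP; rewrite mulf_eq0 subr_eq0 (negbTE Hcq) /= => /eqP.
Qed.

End Sesq.


Definition frobQ (x : F) : F := x ^+ (q ^ 2).
Lemma frobQ_zmod : GRing.zmod_morphism frobQ.
Proof. by move=> x y; rewrite /frobQ frobB. Qed.
Lemma frobQ_mon : GRing.monoid_morphism frobQ.
Proof. by split; [exact: expr1n | move=> x y; exact: exprMn]. Qed.
HB.instance Definition _ := GRing.isZmodMorphism.Build F F frobQ frobQ_zmod.
HB.instance Definition _ := GRing.isMonoidMorphism.Build F F frobQ frobQ_mon.

Section Span.
Variable z : F.
Hypothesis hz : (#|F|.-1).-primitive_root z.

Definition Pz : {poly F} := \prod_(i < n) ('X - (z ^+ (q ^ (2 * i)))%:P).

Lemma Pz_coef i : Pz`_i \in Fq2 q.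
Proof.
have E : map_poly frobQ Pz = Pz.
  rewrite /Pz rmorph_prod.
  rewrite -(@big_shift _ _ *%R _ (fun i => 'X - (z ^+ (q ^ (2 * i)))%:P)).
    apply: eq_bigr => j _; rewrite /= map_polyXsubC /= /frobQ -exprM -expnD.
    by rewrite mulnS addnC.
  by rewrite frobN_all muln0 expn0 expr1.
have := congr1 (fun P : {poly F} => P`_i) E; rewrite coef_map /= /frobQ => H.
by rewrite Fq2E H.
Qed.

Lemma Pz_size : size Pz = n.+1.
Proof.
rewrite /Pz size_prod; last by move=> i _; rewrite polyXsubC_eq0.
under eq_bigr do rewrite size_XsubC.
rewrite sum_nat_const !card_ord; lia.
Qed.

Lemma Pz_monic : Pz \is monic.
Proof. exact: monic_prod_XsubC. Qed.

Lemma Pz_root : Pz.[z] = 0.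
Proof.
rewrite /Pz horner_prod (bigD1 (Ordinal n0)) //= hornerXsubC.
by rewrite muln0 expn0 expr1 subrr mul0r.
Qed.

Lemma zn_eq : z ^+ n = - \sum_(i < n) Pz`_i * z ^+ i.
Proof.
have := Pz_root; rewrite horner_coef Pz_size big_ord_recr /=.
have -> : Pz`_n = 1.
  by have := Pz_monic; rewrite monicE lead_coefE Pz_size => /eqP.
by rewrite mul1r addrC => /eqP; rewrite addr_eq0 => /eqP.
Qed.

Definition inspan (x : F) := forall Pr : F -> Prop,
  Pr 0 -> (forall x y, Pr x -> Pr y -> Pr (x + y)) ->
  (forall c x, c \in Fq2 q -> Pr x -> Pr (c * x)) ->
  (forall i, (i < n)%N -> Pr (z ^+ i)) -> Pr x.

Lemma inspan0 : inspan 0. Proof. by move=> Pr. Qed.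
Lemma inspanD x y : inspan x -> inspan y -> inspan (x + y).
Proof. by move=> Hx Hy Pr H0 HD HZ Hg; apply: (HD); [exact: (Hx Pr) | exact: (Hy Pr)]. Qed.
Lemma inspanZ c x : c \in Fq2 q -> inspan x -> inspan (c * x).
Proof. by move=> Hc Hx Pr H0 HD HZ Hg; apply: (HZ) => //; exact: (Hx Pr). Qed.
Lemma inspang i : (i < n)%N -> inspan (z ^+ i).
Proof. by move=> Hi Pr H0 HD HZ Hg; apply: (Hg). Qed.

Lemma inspan_zn : inspan (z ^+ n).
Proof.
rewrite zn_eq -mulN1r; apply: inspanZ; first exact/Fq2_N/Fq2_1.
apply: (big_ind inspan); [exact: inspan0 | exact: inspanD |].
by move=> i _; apply: inspanZ; [exact: Pz_coef | exact: inspang].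
Qed.

Lemma inspan_z x : inspan x -> inspan (z * x).
Proof.
move=> Hx; apply: (Hx (fun y => inspan (z * y))).
- by rewrite mulr0; exact: inspan0.
- by move=> a b Ha Hb; rewrite mulrDr; exact: inspanD.
- by move=> c a Hc Ha; rewrite mulrCA; exact: inspanZ.
- move=> i Hi; rewrite -exprS.
  case: (ltngtP i.+1 n) => H.
  + exact: inspang.
  + by move: H; rewrite ltnNge Hi.
  + rewrite H; exact: inspan_zn.
Qed.

Lemma inspan_all x : inspan x.
Proof.
have [->|Hx] := eqVneq x 0; first exact: inspan0.
have Hpos : (0 < #|F|)%N by apply: ltnW; apply: cardF_gt1.
have Hx1 : x ^+ #|F|.-1 = 1.
  by apply: (mulfI Hx); rewrite mulr1 -exprS prednK // expf_card.
have [i ->] := prim_rootP hz Hx1.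
elim: (nat_of_ord i) => [|m IH]; first exact: inspang.
by rewrite exprS; apply: inspan_z.
Qed.

Lemma span_ind (Pr : F -> Prop) :
  Pr 0 -> (forall x y, Pr x -> Pr y -> Pr (x + y)) ->
  (forall c x, c \in Fq2 q -> Pr x -> Pr (c * x)) ->
  (forall i, (i < n)%N -> Pr (z ^+ i)) -> forall x, Pr x.
Proof. by move=> H0 HD HZ Hg x; apply: inspan_all. Qed.

Lemma sesq_ext (s t : F -> F -> F) : sesquilinear q s -> sesquilinear q t ->
  (forall i j, (i < n)%N -> (j < n)%N -> s (z ^+ i) (z ^+ j) = t (z ^+ i) (z ^+ j)) ->
  forall u v, s u v = t u v.
Proof.
move=> hs ht H.
have H1 : forall u j, (j < n)%N -> s u (z ^+ j) = t u (z ^+ j).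
  move=> u j Hj; move: u; apply: span_ind.
  - by rewrite (s0l hs) (s0l ht).
  - by move=> x y Hx Hy; rewrite (sDl hs) (sDl ht) Hx Hy.
  - by move=> c x Hc Hx; rewrite (sZl hs) // (sZl ht) // Hx.
  - by move=> i Hi; apply: H.
move=> u; apply: span_ind.
- by rewrite (s0r hs) (s0r ht).
- by move=> x y Hx Hy; rewrite (sDr hs) (sDr ht) Hx Hy.
- by move=> c x Hc Hx; rewrite (sZr hs) // (sZr ht) // Hx.
- by move=> j Hj; apply: H1.
Qed.

End Span.


Lemma card_S2 : (#|{: {x : F | x \in Fq2 q}}| <= q ^ 2)%N.
Proof.
set G : {poly F} := 'X^(q ^ 2) - 'X.
have q1 := q_gt1.
have qq : (1 < q ^ 2)%N by rewrite (ltn_trans q1) // -{1}(expn1 q) ltn_exp2l.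
have Gs : size G = (q ^ 2).+1.
  by rewrite /G size_polyDl size_polyXn // size_polyN size_polyX ltnS.
have G0 : G != 0 by rewrite -size_poly_eq0 Gs.
have Hr : all (root G) (map val (enum {: {x : F | x \in Fq2 q}})).
  apply/allP => x /mapP [y _ ->].
  rewrite /root /G hornerD hornerN hornerXn hornerX subr_eq0; exact: (valP y).
have := max_poly_roots G0 Hr.
rewrite map_inj_uniq ?enum_uniq; last exact: val_inj.
by rewrite size_map -cardE Gs ltnS => /(_ isT).
Qed.

Lemma represent (s : F -> F -> F) : sesquilinear q s ->
  exists a : seq F, forall u v, s u v = sigmaL q n a u v.
Proof.
move=> hs.
have [z hz] := prim_exists.
pose s0 : {x : F | x \in Fq2 q} := exist (fun x => x \in Fq2 q) 0 Fq2_0.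
pose Th (a : n.-tuple F) : {ffun 'I_n * 'I_n -> {x : F | x \in Fq2 q}} :=
  [ffun ij : 'I_n * 'I_n => insubd s0 (sigmaL q n a (z ^+ ij.1) (z ^+ ij.2))].
have Thinj : injective Th.
  move=> a b E.
  have H1 : forall u v, sigmaL q n a u v = sigmaL q n b u v.
    apply: (sesq_ext hz (sigma_sesqui a) (sigma_sesqui b)) => i j Hi Hj.
    have := congr1 (fun f : {ffun 'I_n * 'I_n -> {x : F | x \in Fq2 q}} => val (f (Ordinal Hi, Ordinal Hj))) E.
    by rewrite !ffunE /= !insubdK //; exact: Tr_in.
  have H2 : forall w, (qlin_poly q a).[w] = (qlin_poly q b).[w].
    by move=> w; rewrite (frob_surj w); apply: Tr_inj => u; exact: H1.
  apply: eq_from_tnth => i; rewrite !(tnth_nth 0).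
  by apply: qlin_inj => //; rewrite size_tuple.
have Hcard : (#|{: {ffun 'I_n * 'I_n -> {x : F | x \in Fq2 q}}}| <= #|{: n.-tuple F}|)%N.
  rewrite card_ffun card_prod card_ord card_tuple cardF.
  apply: (@leq_trans ((q ^ 2) ^ (n * n))).
    by rewrite leq_exp2r ?muln_gt0 ?n0 //; exact: card_S2.
  by rewrite -!expnM mulnA.
pose target : {ffun 'I_n * 'I_n -> {x : F | x \in Fq2 q}} :=
  [ffun ij : 'I_n * 'I_n => insubd s0 (s (z ^+ ij.1) (z ^+ ij.2))].
have /codomP [a Ea] := inj_card_onto Thinj Hcard target.
exists a; apply: (sesq_ext hz hs (sigma_sesqui a)) => i j Hi Hj.
have := congr1 (fun f : {ffun 'I_n * 'I_n -> {x : F | x \in Fq2 q}} => val (f (Ordinal Hi, Ordinal Hj))) Ea.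
have M1 : s (z ^+ i) (z ^+ j) \in Fq2 q by case: hs.
by rewrite !ffunE /= (insubdK _ M1) (insubdK _ (Tr_in _)).
Qed.

Lemma main_sec :
  (forall s : F -> F -> F, sesquilinear q s ->
     exists a : seq F, forall u v, s u v = sigmaL q n a u v) /\
  (forall a : seq F,
     (alternating (sigmaL q n a) <-> (forall u v, sigmaL q n a u v = 0)) /\
     ((forall u v, sigmaL q n a u v = 0) <->
        ('X^(q ^ (2 * n)) - 'X) %| qlin_poly q a)).
Proof.
split; first exact: represent.
move=> a; split; last exact: zero_iff.
split; last by move=> H v; apply: H.
by move=> H; apply: (alt_zero (sigma_sesqui a)).
Qed.

End Main.

Theorem theorem2p1 (q n : nat) (F : finFieldType) :
  prime_power q -> (0 < n)%N -> #|F| = (q ^ (2 * n))%N ->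
  (forall s : F -> F -> F, sesquilinear q s ->
     exists a : seq F, forall u v, s u v = sigmaL q n a u v) /\
  (forall a : seq F,
     (alternating (sigmaL q n a) <-> (forall u v, sigmaL q n a u v = 0)) /\
     ((forall u v, sigmaL q n a u v = 0) <->
        ('X^(q ^ (2 * n)) - 'X) %| qlin_poly q a)).
Proof.
move=> [p [k [pp k0 hq]]] n0 cardF.
exact: (main_sec pp k0 n0 hq cardF).
Qed.
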